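(* Let $p,q,r$ be idempotents in a unital ring $A$ with $p\perp r$ and $q\perp r$. If $\operatorname{sr}(pAq)=1$ and $r\lesssim n\cdot p$ for some $n\in\mathbb N$, then $\operatorname{sr}((p+r)A(q+r))=1$.
   Context: Idempotents $e,f$ are orthogonal, $e\perp f$, if $ef=fe=0$. For idempotents $p,q$ in a unital ring $R$, $\operatorname{sr}(pRq)=1$ means: whenever $a\in pRq$, $x\in qRp$, $b\in pRp$ satisfy $ax+b=p$, there exist $y\in pRq$, $z\in qRp$ with $(a+by)z=p$. $A$ is identified with the upper left corner $e_{11}M_n(A)e_{11}$ of $M_n(A)$, and $n\cdot p=\mathrm{diag}(p,\dots,p)\in M_n(A)$. For idempotents $e,f$ in a ring $R$ (here $R=M_n(A)$), $e\lesssim f$ means there exist $a\in eRf$, $b\in fRe$ with $ab=e$. *)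

(* Defs.v *)
From mathcomp Require Import all_boot all_order all_algebra.
Set Implicit Arguments. Unset Strict Implicit. Unset Printing Implicit Defensive.
Import GRing.Theory.
Local Open Scope ring_scope.

Definition is_idem {R : pzRingType} (e : R) : Prop := e * e = e.

Definition orth {R : pzRingType} (e f : R) : Prop := e * f = 0 /\ f * e = 0.

Definition in_corner {R : pzRingType} (p q a : R) : Prop := exists t : R, a = p * t * q.

Definition sr_one {R : pzRingType} (p q : R) : Prop :=
  forall a x b : R,
    in_corner p q a -> in_corner q p x -> in_corner p p b ->
    a * x + b = p ->
    exists y z : R, in_corner p q y /\ in_corner q p z /\ (a + b * y) * z = p.

Definition lesssim {R : pzRingType} (e f : R) : Prop :=
  exists a b : R, in_corner e f a /\ in_corner f e b /\ a * b = e.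

(* A identified with the upper-left corner e11 M_m(A) *)
Definition corner_embed {A : pzRingType} (m : nat) (x : A) : 'M[A]_m.+1 :=
  \matrix_(i, j) (if (i == ord0) && (j == ord0) then x else 0).

Definition ndiag {A : pzRingType} (m : nat) (p : A) : 'M[A]_m.+1 := p%:M.

(* Main.v *)
Require Import Defs.
From mathcomp Require Import all_boot all_order all_algebra.
Local Open Scope ring_scope.

Set Implicit Arguments. Unset Strict Implicit. Unset Printing Implicit Defensive.
Import GRing.Theory.


Section Gen.
Variable B : pzRingType.
Implicit Types e f g a b c x y z t u : B.

Definition In e f a := e * a = a /\ a * f = a.
Definition idem e := e * e = e.
Definition Orth e f := e * f = 0 /\ f * e = 0.

Lemma mulrAr x y z t : x * y = z -> x * (y * t) = z * t.
Proof. by move=> H; rewrite mulrA H. Qed.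

Lemma In_idem e : idem e -> In e e e.
Proof. by move=> H; split. Qed.

Lemma In_mul e f g a b : In e f a -> In f g b -> In e g (a * b).
Proof. by move=> [H1 H2] [H3 H4]; split; rewrite ?mulrA ?H1 // -mulrA H4. Qed.

Lemma In_add e f a b : In e f a -> In e f b -> In e f (a + b).
Proof. by move=> [H1 H2] [H3 H4]; split; rewrite ?mulrDr ?mulrDl ?H1 ?H2 ?H3 ?H4. Qed.

Lemma In_opp e f a : In e f a -> In e f (- a).
Proof. by move=> [H1 H2]; split; rewrite ?mulrN ?mulNr ?H1 ?H2. Qed.

Lemma In_sub e f a b : In e f a -> In e f b -> In e f (a - b).
Proof. by move=> H1 H2; apply: In_add => //; apply: In_opp. Qed.

Lemma In0 e f : In e f 0.
Proof. by split; rewrite ?mulr0 ?mul0r. Qed.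

Lemma In_sub_idem e f e' f' a : In e f a -> e' * e = e -> f * f' = f -> In e' f' a.
Proof.
move=> [H1 H2] He Hf; split.
  by rewrite -H1 mulrA He.
by rewrite -H2 -mulrA Hf.
Qed.

Lemma In_l e f a : In e f a -> e * a = a. Proof. by case. Qed.
Lemma In_r e f a : In e f a -> a * f = a. Proof. by case. Qed.

Lemma in_cornerP e f a : idem e -> idem f -> in_corner e f a <-> In e f a.
Proof.
move=> He Hf; split.
  by move=> [t ->]; split; rewrite ?mulrA ?He // -!mulrA Hf.
by move=> [H1 H2]; exists a; rewrite H1 H2.
Qed.

Definition S' e f := forall a x b, In e f a -> In f e x -> In e e b -> a * x + b = e ->
  exists y z, In e f y /\ In f e z /\ (a + b * y) * z = e.

Lemma sr_oneP e f : idem e -> idem f -> sr_one e f <-> S' e f.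
Proof.
move=> He Hf; split.
  move=> H a x b Ha Hx Hb Hr.
  have [y [z [Hy [Hz E]]]] := H a x b (proj2 (in_cornerP _ He Hf) Ha)
    (proj2 (in_cornerP _ Hf He) Hx) (proj2 (in_cornerP _ He He) Hb) Hr.
  by exists y, z; split; [apply/(in_cornerP _ He Hf)|split; [apply/(in_cornerP _ Hf He)|]].
move=> H a x b Ha Hx Hb Hr.
have [y [z [Hy [Hz E]]]] := H a x b (proj1 (in_cornerP _ He Hf) Ha)
    (proj1 (in_cornerP _ Hf He) Hx) (proj1 (in_cornerP _ He He) Hb) Hr.
by exists y, z; split; [apply/(in_cornerP _ He Hf)|split; [apply/(in_cornerP _ Hf He)|]].
Qed.

Definition Eqv e e' := exists w w', In e e' w /\ In e' e w' /\ w * w' = e /\ w' * w = e'.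

Lemma Eqv_refl e : idem e -> Eqv e e.
Proof. by move=> H; exists e, e. Qed.

Lemma Eqv_sym e e' : Eqv e e' -> Eqv e' e.
Proof. by move=> [w [w' [H1 [H2 [H3 H4]]]]]; exists w', w. Qed.

Lemma Eqv_trans e1 e2 e3 : Eqv e1 e2 -> Eqv e2 e3 -> Eqv e1 e3.
Proof.
move=> [w [w' [H1 [H2 [H3 H4]]]]] [v [v' [K1 [K2 [K3 K4]]]]].
exists (w * v), (v' * w'); split; first exact: In_mul H1 K1.
split; first exact: In_mul K2 H2.
split.
  by rewrite -mulrA (mulrA v) K3 (In_l H2) H3.
by rewrite -mulrA (mulrA w') H4 (In_l K1) K4.
Qed.

Lemma Eqv_idem e e' : Eqv e e' -> idem e /\ idem e'.
Proof.
move=> [w [w' [H1 [H2 [H3 H4]]]]]; split.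
  by rewrite /idem -{1}H3 -mulrA (In_r H2).
by rewrite /idem -{1}H4 -mulrA (In_r H1).
Qed.

Lemma Eqv_add e1 e2 e1' e2' : Orth e1 e2 -> Orth e1' e2' ->
  Eqv e1 e1' -> Eqv e2 e2' -> Eqv (e1 + e2) (e1' + e2').
Proof.
move=> [O1 O2] [O1' O2'] [w1 [w1' [H1 [H2 [H3 H4]]]]] [w2 [w2' [K1 [K2 [K3 K4]]]]].
have c1 : w1 * w2' = 0 by rewrite -(In_r H1) -(In_l K2) mulrA -(mulrA w1) O1' mulr0 mul0r.
have c2 : w2 * w1' = 0 by rewrite -(In_r K1) -(In_l H2) mulrA -(mulrA w2) O2' mulr0 mul0r.
have c3 : w1' * w2 = 0 by rewrite -(In_r H2) -(In_l K1) mulrA -(mulrA w1') O1 mulr0 mul0r.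
have c4 : w2' * w1 = 0 by rewrite -(In_r K2) -(In_l H1) mulrA -(mulrA w2') O2 mulr0 mul0r.
exists (w1 + w2), (w1' + w2'); split; last split; last split.
- split.
    rewrite !mulrDl !mulrDr (In_l H1) (In_l K1).
    by rewrite -{2}(In_l H1) -{1}(In_l K1) !mulrA O1 O2 !mul0r addr0 add0r.
  rewrite !mulrDl !mulrDr (In_r H1) (In_r K1).
  by rewrite -{2}(In_r H1) -{1}(In_r K1) -!mulrA O1' O2' !mulr0 addr0 add0r.
- split.
    rewrite !mulrDl !mulrDr (In_l H2) (In_l K2).
    by rewrite -{2}(In_l H2) -{1}(In_l K2) !mulrA O1' O2' !mul0r addr0 add0r.
  rewrite !mulrDl !mulrDr (In_r H2) (In_r K2).
  by rewrite -{2}(In_r H2) -{1}(In_r K2) -!mulrA O1 O2 !mulr0 addr0 add0r.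
- by rewrite !mulrDl !mulrDr H3 K3 c1 c2 addr0 add0r.
- by rewrite !mulrDl !mulrDr H4 K4 c3 c4 addr0 add0r.
Qed.

Lemma transport e f e' f' : S' e f -> Eqv e e' -> Eqv f f' -> S' e' f'.
Proof.
move=> HS [w [w' [H1 [H2 [H3 H4]]]]] [v [v' [K1 [K2 [K3 K4]]]]].
move=> a x b Ha Hx Hb Hr.
have Ha0 : In e f (w * a * v') by apply: In_mul (In_mul H1 Ha) K2.
have Hx0 : In f e (v * x * w') by apply: In_mul (In_mul K1 Hx) H2.
have Hb0 : In e e (w * b * w') by apply: In_mul (In_mul H1 Hb) H2.
have Hr0 : w * a * v' * (v * x * w') + w * b * w' = e.
  rewrite -!mulrA (mulrA v') K4 (mulrA f') (In_l Hx) -mulrDr (mulrA a) -mulrDl.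
  by rewrite Hr (In_l H2) H3.
have [y [z [Hy [Hz E]]]] := HS _ _ _ Ha0 Hx0 Hb0 Hr0.
exists (w' * y * v), (v' * z * w); split; first exact: In_mul (In_mul H2 Hy) K1.
split; first exact: In_mul (In_mul K2 Hz) H1.
have E2 : a + b * (w' * y * v) = w' * (w * a * v' + w * b * w' * y) * v.
  rewrite mulrDr mulrDl !mulrA H4 (In_l Ha) -!mulrA K4 (In_r Ha).
  by rewrite !mulrA (In_l Hb).
have E3 := In_r (In_add Ha0 (In_mul Hb0 Hy)).
rewrite E2 !mulrA -(mulrA _ v v') K3 -(mulrA w' _ f) E3 -(mulrA w' _ z) E.
by rewrite (In_r H2) H4.
Qed.

End Gen.


Section Gen2.
Variable B : pzRingType.
Implicit Types e f g a b c x y z t u : B.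

Lemma In_sandwich e f t : idem e -> idem f -> In e f (e * t * f).
Proof. by move=> He Hf; split; rewrite ?mulrA ?He // -mulrA Hf. Qed.

Lemma idem_add e f : idem e -> idem f -> Orth e f -> idem (e + f).
Proof.
move=> He Hf [O1 O2]; rewrite /idem mulrDl !mulrDr He Hf O1 O2.
by rewrite addr0 add0r.
Qed.

Lemma le_add_l e y : idem e -> Orth e y -> (e + y) * e = e /\ e * (e + y) = e.
Proof. by move=> He [O1 O2]; rewrite mulrDl mulrDr He O1 O2 addr0. Qed.

Lemma le_add_r e y : idem y -> Orth e y -> (e + y) * y = y /\ y * (e + y) = y.
Proof. by move=> Hy [O1 O2]; rewrite mulrDl mulrDr Hy O1 O2 add0r. Qed.

Lemma In_up e f e' f' a : In e f a -> e' * e = e -> f * f' = f -> In e' f' a.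
Proof. exact: In_sub_idem. Qed.

Lemma V2 e f y : idem e -> idem f -> idem y -> Orth e y -> Orth f y ->
  S' (e + y) (f + y) -> S' e f.
Proof.
move=> He Hf Hy Oey Ofy HS a x b Ha Hx Hb Hr.
have [Le1 Le2] := le_add_l He Oey.
have [Lf1 Lf2] := le_add_l Hf Ofy.
have [Ly1 Ly2] := le_add_r Hy Oey.
have [My1 My2] := le_add_r Hy Ofy.
have Ha' : In (e + y) (f + y) (a + y).
  apply: In_add; first exact: In_up Ha Le1 Lf2.
  exact: In_up (In_idem Hy) Ly1 My2.
have Hx' : In (f + y) (e + y) (x + y).
  apply: In_add; first exact: In_up Hx Lf1 Le2.
  exact: In_up (In_idem Hy) My1 Ly2.
have Hb' : In (e + y) (e + y) b by exact: In_up Hb Le1 Le2.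
have ay : a * y = 0 by rewrite -(In_r Ha) -mulrA (proj1 Ofy) mulr0.
have ya : y * a = 0 by rewrite -(In_l Ha) mulrA (proj2 Oey) mul0r.
have yx : y * x = 0 by rewrite -(In_l Hx) mulrA (proj2 Ofy) mul0r.
have yb : y * b = 0 by rewrite -(In_l Hb) mulrA (proj2 Oey) mul0r.
have eb : e * b = b by exact: In_l Hb.
have Hr' : (a + y) * (x + y) + b = e + y.
  rewrite mulrDl !mulrDr ay yx Hy addr0 add0r -Hr.
  by rewrite addrAC.
have [Y [Z [HY [HZ E]]]] := HS _ _ _ Ha' Hx' Hb' Hr'.
exists (e * Y * f), (f * Z * e); split; first exact: In_sandwich.
split; first exact: In_sandwich.
have E1 : (a + b * Y) * Z = e.
  have := congr1 (fun t => e * t) E; rewrite /= mulrA !mulrDr (In_l Ha).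
  by rewrite (proj1 Oey) !addr0 mulrA eb He.
have E2 : y * Z = y.
  have := congr1 (fun t => y * t) E; rewrite /= mulrA !mulrDr ya Hy mulrA yb.
  by rewrite mul0r add0r addr0 (proj2 Oey) add0r.
have E3 : (a + b * Y) * f * Z * e = e.
  have H0 : (a + b*Y) * ((f+y)*Z) * e = e by rewrite (In_l HZ) E1 He.
  by rewrite (mulrDl f y Z) mulrDr E2 mulrDl -(mulrA _ y e) (proj2 Oey) mulr0 addr0 mulrA in H0.
have E4 : a + b*(e*Y*f) = (a + b*Y)*f by rewrite mulrDl (In_r Ha) !mulrA (In_r Hb).
by rewrite E4 !mulrA -(mulrA _ f f) Hf.
Qed.

End Gen2.


Section Red.
Variable B : pzRingType.
Implicit Types e f g a b c x y z t u : B.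

Definition Sol e f a b := exists y z, In e f y /\ In f e z /\ (a + b * y) * z = e.

Lemma Ra e f a b y0 : In e f y0 -> Sol e f (a + b * y0) b -> Sol e f a b.
Proof.
move=> H0 [y [z [Hy [Hz E]]]]; exists (y0 + y), z; split; first exact: In_add.
by split => //; rewrite mulrDr addrA.
Qed.

Lemma Rb e f a b t : idem e -> In e e t -> Sol e f a (b * t) -> Sol e f a b.
Proof.
move=> He Ht [y [z [Hy [Hz E]]]]; exists (t * y), z; split; first exact: In_mul Ht Hy.
by split => //; rewrite mulrA.
Qed.

Lemma Rc e f a b u u' : In f f u -> In f f u' -> u' * u = f ->
  Sol e f (a * u) b -> Sol e f a b.
Proof.
move=> Hu Hu' E1 [y [z [Hy [Hz E]]]]; exists (y * u'), (u * z).
split; first exact: In_mul Hy Hu'.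
split; first exact: In_mul Hu Hz.
by rewrite mulrA mulrDl -!mulrA E1 (In_r Hy).
Qed.

Lemma Rd e f a b U U' : In e e U -> In e e U' -> U' * U = e -> In e f a -> In e e b ->
  Sol e f (U * a) (U * b * U') -> Sol e f a b.
Proof.
move=> HU HU' E1 Ha Hb [y [z [Hy [Hz E]]]]; exists (U' * y), (z * U).
split; first exact: In_mul HU' Hy.
split; first exact: In_mul Hz HU.
have -> : a + b * (U' * y) = U' * (U * a + U * b * U' * y).
  by rewrite mulrDr !mulrA E1 (In_l Ha) (In_l Hb).
by rewrite mulrA -(mulrA U' _ z) E (In_r HU') E1.
Qed.

End Red.


Section KL.
Variable B : pzRingType.
Variables p q r : B.
Hypotheses (Hp : idem p) (Hq : idem q) (Hr : idem r) (Opr : Orth p r) (Oqr : Orth q r).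
Variables e f : B.
Hypotheses (Edef : e = p + r) (Fdef : f = q + r).

Let pr : p * r = 0. Proof. exact: Opr.1. Qed.
Let rp : r * p = 0. Proof. exact: Opr.2. Qed.
Let qr : q * r = 0. Proof. exact: Oqr.1. Qed.
Let rq : r * q = 0. Proof. exact: Oqr.2. Qed.
Let He : idem e. Proof. rewrite ?Edef ?Fdef; exact: idem_add. Qed.
Let Hf : idem f. Proof. rewrite ?Edef ?Fdef; exact: idem_add. Qed.
Let ep : e * p = p. Proof. rewrite ?Edef ?Fdef. exact: (le_add_l Hp Opr).1. Qed.
Let pe : p * e = p. Proof. rewrite ?Edef ?Fdef. exact: (le_add_l Hp Opr).2. Qed.
Let er : e * r = r. Proof. rewrite ?Edef ?Fdef. exact: (le_add_r Hr Opr).1. Qed.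
Let re : r * e = r. Proof. rewrite ?Edef ?Fdef. exact: (le_add_r Hr Opr).2. Qed.
Let fq : f * q = q. Proof. rewrite ?Edef ?Fdef. exact: (le_add_l Hq Oqr).1. Qed.
Let qf : q * f = q. Proof. rewrite ?Edef ?Fdef. exact: (le_add_l Hq Oqr).2. Qed.
Let fr : f * r = r. Proof. rewrite ?Edef ?Fdef. exact: (le_add_r Hr Oqr).1. Qed.
Let rf : r * f = r. Proof. rewrite ?Edef ?Fdef. exact: (le_add_r Hr Oqr).2. Qed.

Section F2.
Variables c z1 : B.
Hypotheses (Hc : In p q c) (Hz1 : In q p z1) (cz1 : c * z1 = p).
Variables d q' : B.
Hypotheses (Ddef : d = z1 * c) (Q'def : q' = q - d).
Hypothesis HS : S' r (q' + r).

Let Hd : In q q d. Proof. rewrite Ddef; exact: In_mul Hz1 Hc. Qed.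
Let cd : c * d = c. Proof. by rewrite Ddef mulrA cz1 (In_l Hc). Qed.
Let dz1 : d * z1 = z1. Proof. by rewrite Ddef -mulrA cz1 (In_r Hz1). Qed.
Let q'z1 : q' * z1 = 0. Proof. by rewrite Q'def mulrBl (In_l Hz1) dz1 subrr. Qed.
Let cq' : c * q' = 0. Proof. by rewrite Q'def mulrBr (In_r Hc) cd subrr. Qed.
Let rz1 : r * z1 = 0. Proof. by rewrite -(In_l Hz1) mulrA rq mul0r. Qed.
Let q'rz1 : (q' + r) * z1 = 0. Proof. by rewrite mulrDl q'z1 rz1 addr0. Qed.
Let Hq' : In q q q'. Proof. rewrite Q'def; apply: In_sub; [exact: In_idem|exact: Hd]. Qed.
Let Hq'idem : idem q'.
Proof.
have dd : d * d = d by rewrite Ddef mulrA -(mulrA z1 c z1) cz1 (In_r Hz1).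
have q'd : q' * d = 0 by rewrite Q'def mulrBl (In_l Hd) dd subrr.
by rewrite /idem {2}Q'def mulrBr (In_r Hq') q'd subr0.
Qed.
Let q'r : q' * r = 0. Proof. by rewrite -(In_r Hq') -mulrA qr mulr0. Qed.
Let rq' : r * q' = 0. Proof. by rewrite -(In_l Hq') mulrA rq mul0r. Qed.
Let Hq'r : idem (q' + r). Proof. by apply: idem_add. Qed.
Let q'rf : (q' + r) * f = q' + r.
Proof. by rewrite Fdef mulrDl !mulrDr (In_r Hq') q'r rq Hr addr0 add0r. Qed.
Let fq'r : f * (q' + r) = q' + r.
Proof. by rewrite Fdef mulrDl !mulrDr (In_l Hq') qr rq' Hr addr0 add0r. Qed.
Let cr : c * r = 0. Proof. by rewrite -(In_r Hc) -mulrA qr mulr0. Qed.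

Lemma Final2 a x b : In e f a -> In f e x -> In e e b -> a * x + b = e ->
  p * a = c -> r * a * d = 0 -> Sol e f a b.
Proof.
move=> Ha Hx Hb Hrel pa rad.
pose s := r * a.
have acs : a = c + s by rewrite -pa /s -mulrDl -Edef (In_l Ha).
have q'rfd : q' + r = f - d by rewrite Q'def Fdef addrAC.
have Hs : In r (q' + r) s.
  split; first by rewrite /s mulrA Hr.
  by rewrite q'rfd mulrBr /s -mulrA (In_r Ha) rad subr0.
have az1 : a * z1 = p.
  by rewrite acs mulrDl cz1 -(In_r Hs) -mulrA q'rz1 mulr0 addr0.
pose v0 := z1 * (p * b).
have pb : p * b = a * v0 by rewrite /v0 mulrA az1 mulrA Hp.
have Hx'' : In (q' + r) r ((q' + r) * x * r) by exact: In_sandwich.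
have Hb'' : In r r (r * b * r) by exact: In_sandwich.
have rel'' : s * ((q' + r) * x * r) + r * b * r = r.
  rewrite !mulrA (In_r Hs) -mulrDl /s -(mulrA r a x) -mulrDr Hrel.
  by rewrite re Hr.
have [y'' [z'' [Hy'' [Hz'' E'']]]] := HS Hs Hx'' Hb'' rel''.
have HY : In e f y'' by apply: In_up Hy'' er q'rf.
have Hpe : In p e p by split; rewrite ?Hp ?pe.
have Hv0 : In f e v0 by apply: In_mul (In_up Hz1 fq Hp) (In_mul Hpe Hb).
have Yv0 : y'' * v0 = 0.
  by rewrite /v0 -(In_r Hy'') -mulrA (mulrA (q' + r)) q'rz1 mul0r mulr0.
exists y'', ((f - v0 * y'') * (z1 + z'')); split => //.
split.
  apply: In_mul; first by apply: In_sub (In_idem Hf) (In_mul Hv0 HY).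
  by apply: In_add; [apply: In_up Hz1 fq pe|apply: In_up Hz'' fq'r re].
have Hab : In e f (a + b * y'') by apply: In_add Ha (In_mul Hb HY).
have bsplit : b * y'' = p * b * y'' + r * b * r * y''.
  by rewrite -(mulrA _ r) (In_l Hy'') -mulrDl -mulrDl -Edef (In_l Hb).
have K1 : (a + b * y'') * (f - v0 * y'') = c + (s + r * b * r * y'').
  rewrite mulrBr (In_r Hab) (mulrDl a) -(mulrA b) (mulrA y'') Yv0 mul0r mulr0.
  rewrite addr0 mulrA -pb bsplit acs.
  by rewrite (addrC (p * b * y'')) addrA addrK -addrA.
have Hsb : In r (q' + r) (s + r * b * r * y'') by apply: In_add Hs (In_mul Hb'' Hy'').
have K2 : (c + (s + r * b * r * y'')) * (z1 + z'') = e.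
  rewrite mulrDl !mulrDr cz1 E''.
  rewrite -(In_l Hz'') mulrA (mulrDr c) cq' cr addr0 mul0r addr0.
  rewrite -{1}(In_r Hsb) -mulrA q'rz1 mulr0 add0r Edef.
  done.
by rewrite mulrA K1 K2.
Qed.

Let dd : d * d = d.
Proof. by rewrite Ddef mulrA -(mulrA z1 c z1) cz1 (In_r Hz1). Qed.
Let z1r : z1 * r = 0. Proof. by rewrite -(In_r Hz1) -mulrA pr mulr0. Qed.
Let Hpp : In p p p. Proof. exact: In_idem. Qed.
Let Hee : In e e e. Proof. exact: In_idem. Qed.

Lemma Final1 a x b : In e f a -> In f e x -> In e e b -> a * x + b = e ->
  p * a = c -> Sol e f a b.
Proof.
move=> Ha Hx Hb Hrel pa.
pose M := r * a * q * z1.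
have HM : In e e M.
  apply: In_up (er) (pe); split; first by rewrite /M !mulrA Hr.
  by rewrite /M -mulrA (In_r Hz1).
have MM : M * M = 0 by rewrite /M -!mulrA (mulrA z1 r) z1r mul0r !mulr0.
have HU : In e e (e - M) by apply: In_sub.
have HU' : In e e (e + M) by apply: In_add.
have UU' : (e - M) * (e + M) = e.
  by rewrite mulrBl !mulrDr He (In_l HM) (In_r HM) MM addr0 addrK.
have U'U : (e + M) * (e - M) = e.
  by rewrite mulrDl !mulrBr He (In_l HM) (In_r HM) MM subr0 subrK.
apply: (@Rd _ e f a b (e - M) (e + M) HU HU' U'U Ha Hb).
have pM : p * M = 0 by rewrite /M !mulrA pr !mul0r.
have z1a : z1 * a = d.
  by rewrite -(In_r Hz1) -mulrA pa Ddef.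
apply: Final2.
- exact: In_mul HU Ha.
- exact: In_mul Hx HU'.
- exact: In_mul (In_mul HU Hb) HU'.
- have -> : (e - M) * a * (x * (e + M)) + (e - M) * b * (e + M) =
    (e - M) * (a * x + b) * (e + M)
    by rewrite (mulrDr (e - M) (a * x) b) (mulrDl _ _ (e + M)) !mulrA.
  by rewrite Hrel (In_r HU) UU'.
- by rewrite mulrA mulrBr pe pM subr0 pa.
- rewrite mulrA mulrBr re mulrBl /M -!mulrA z1a (In_l Hd).
  rewrite (mulrA r r) Hr mulrA mulrBl -(mulrA _ d d) dd subrr.
  done.
Qed.

Lemma Final0 a x b : In e f a -> In f e x -> In e e b -> a * x + b = e ->
  p * a * q = c -> Sol e f a b.
Proof.
move=> Ha Hx Hb Hrel paq.
pose N := z1 * (p * a * r).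
have HN : In f f N.
  exact: In_up (In_mul Hz1 (In_sandwich a Hp Hr)) fq rf.
have NN : N * N = 0 by rewrite /N -!mulrA (mulrA r z1) rz1 mul0r !mulr0.
have Hu : In f f (f - N) by apply: In_sub.
have Hu' : In f f (f + N) by apply: In_add.
have E1 : (f + N) * (f - N) = f.
  by rewrite mulrDl !mulrBr Hf (In_l HN) (In_r HN) NN subr0 subrK.
have E2 : (f - N) * (f + N) = f.
  by rewrite mulrBl !mulrDr Hf (In_l HN) (In_r HN) NN addr0 addrK.
apply: (Rc Hu Hu' E1).
have paz1 : p * a * z1 = p.
  by rewrite -(In_l Hz1) mulrA paq cz1.
apply: Final1.
- exact: In_mul Ha Hu.
- exact: In_mul Hu' Hx.
- exact: Hb.
- by rewrite -mulrA (mulrA _ (f + N)) E2 (In_l Hx).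
- rewrite mulrA mulrBr -mulrA (In_r Ha) /N !mulrA paz1 Hp.
  rewrite -{1}(In_r Ha) Fdef mulrDr mulrDr !mulrA addrK.
  exact: paq.
Qed.

End F2.

Lemma KLmain : S' p q ->
  (forall c z1, In p q c -> In q p z1 -> c * z1 = p -> S' r ((q - z1 * c) + r)) ->
  S' e f.
Proof.
move=> Spq H a x b Ha Hx Hb Hrel.
pose a1 := p * a * q; pose x1 := q * x * p.
pose b1 := p * b * p + p * (a * r * x) * p.
have Ha1 : In p q a1 by exact: In_sandwich.
have Hx1 : In q p x1 by exact: In_sandwich.
have Hb1 : In p p b1 by apply: In_add; exact: In_sandwich.
have QR : a * q * x + a * r * x = a * x by rewrite -mulrDl -mulrDr -Fdef (In_r Ha).
have rel1 : a1 * x1 + b1 = p.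
  have eq1 : a1 * x1 = p * (a * q * x) * p.
    by rewrite /a1 /x1 !mulrA -(mulrA (p * a) q q) Hq.
  rewrite eq1 /b1 (addrC (p * b * p)) addrA -mulrDl -mulrDr QR -mulrDl -mulrDr.
  by rewrite Hrel pe Hp.
have [y1 [z1 [Hy1 [Hz1 E1]]]] := Spq _ _ _ Ha1 Hx1 Hb1 rel1.
pose c := a1 + b1 * y1.
have Hc : In p q c by apply: In_add Ha1 (In_mul Hb1 Hy1).
have y1r : y1 * r = 0 by rewrite -(In_r Hy1) -mulrA qr mulr0.
pose w := r * x * p * y1.
have Hw : In f f w.
  apply: In_up (_ : In r q w) fr qf; split; first by rewrite /w !mulrA Hr.
  by rewrite /w -mulrA (In_r Hy1).
have y1w : y1 * w = 0 by rewrite /w !mulrA y1r !mul0r.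
have ww : w * w = 0 by rewrite /w -!mulrA (mulrA y1 r) y1r mul0r !mulr0.
have Hu : In f f (f + w) by apply: In_add => //; exact: In_idem.
have Hu' : In f f (f - w) by apply: In_sub => //; exact: In_idem.
have Eu : (f + w) * (f - w) = f.
  by rewrite mulrDl !mulrBr Hf (In_l Hw) (In_r Hw) ww subr0 subrK.
have Eu' : (f - w) * (f + w) = f.
  by rewrite mulrBl !mulrDr Hf (In_l Hw) (In_r Hw) ww addr0 addrK.
have Hy1e : In e f y1 by apply: In_up Hy1 ep qf.
apply: (Rc Hu Hu' Eu').
apply: (Ra Hy1e).
have Ht : In e e (e - y1 * x) by apply: In_sub; [exact: In_idem|exact: In_mul Hy1e Hx].
apply: (Rb He Ht).
have HS' := H c z1 Hc Hz1 E1.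
apply: (Final0 Hc Hz1 E1 (erefl _) (erefl _) HS').
- by apply: In_add; [exact: In_mul Ha Hu|exact: In_mul Hb Hy1e].
- exact: In_mul Hu' Hx.
- exact: In_mul Hb Ht.
- have E : (a * (f + w) + b * y1) * (f - w) = a + b * y1.
    by rewrite mulrDl -mulrA Eu (In_r Ha) -mulrA mulrBr (In_r Hy1e) y1w subr0.
  rewrite mulrA E mulrBr (In_r Hb) mulrDl.
  by rewrite mulrA -addrA (addrCA (b * y1 * x)) subrr addr0 Hrel.
- have wq : w * q = w by rewrite /w -mulrA (In_r Hy1).
  have fwq : (f + w) * q = q + w by rewrite mulrDl fq wq.
  have L : p * (a * (f + w) + b * y1) * q = p * a * q + p * a * w + p * b * y1.
    by rewrite mulrDr mulrDl -!mulrA fwq (In_r Hy1) mulrDr mulrDr !mulrA.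
  rewrite L /c /a1 /b1 mulrDl /w !mulrA -(mulrA (p * b) p y1) (In_l Hy1).
  by rewrite -addrA (addrC (p * a * r * x * p * y1)) addrA.
Qed.
End KL.


Section V1.
Variable B : pzRingType.
Implicit Types e f g a b c x y z t u : B.

Lemma S'0 f : S' 0 f.
Proof.
move=> a x b _ _ _ _; exists 0, 0; split; first exact: In0.
by split; [exact: In0|rewrite mulr0].
Qed.

Lemma Dlemma p q c z1 : idem p -> idem q -> In p q c -> In q p z1 -> c * z1 = p ->
  [/\ idem (z1 * c), In q q (z1 * c), Eqv (z1 * c) p, Orth (z1 * c) (q - z1 * c)
    & [/\ idem (q - z1 * c), q * (q - z1 * c) = q - z1 * c & (q - z1 * c) * q = q - z1 * c]].
Proof.
move=> Hp Hq Hc Hz1 cz1.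
have dd : z1 * c * (z1 * c) = z1 * c by rewrite mulrA -(mulrA z1 c z1) cz1 (In_r Hz1).
have Hd : In q q (z1 * c) by exact: In_mul Hz1 Hc.
have dq' : z1 * c * (q - z1 * c) = 0 by rewrite mulrBr (In_r Hd) dd subrr.
have q'd : (q - z1 * c) * (z1 * c) = 0 by rewrite mulrBl (In_l Hd) dd subrr.
have qq' : q * (q - z1 * c) = q - z1 * c by rewrite mulrBr Hq (In_l Hd).
have q'q : (q - z1 * c) * q = q - z1 * c by rewrite mulrBl Hq (In_r Hd).
split; [exact: dd|exact: Hd| |by split|].
- exists z1, c; split; first by split; rewrite ?mulrA ?(In_r Hz1) // -mulrA cz1 (In_r Hz1).
  split; first by split; rewrite ?(In_l Hc) // mulrA cz1 (In_l Hc).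
  by [].
- split => //.
  by rewrite /idem mulrBr q'q q'd subr0.
Qed.

Variable pi : nat -> B.
Variable e0 : B.
Variable K : nat.
Hypothesis Hpi : forall i, (i < K)%N -> Eqv (pi i) e0.
Hypothesis Opi : forall i j, (i < K)%N -> (j < K)%N -> i != j -> pi i * pi j = 0.

Let Ipi i : (i < K)%N -> idem (pi i). Proof. by move=> H; exact: (Eqv_idem (Hpi H)).1. Qed.

Definition Good Q := forall x y, Eqv x e0 -> Eqv y e0 -> Orth x Q -> Orth y Q ->
  S' x (y + Q).

Lemma sum_left k X : (forall i, (i < k)%N -> X * pi i = 0) -> X * (\sum_(i < k) pi i) = 0.
Proof.
move=> H; rewrite mulr_sumr big1 // => i _; exact: H.
Qed.

Lemma sum_right k X : (forall i, (i < k)%N -> pi i * X = 0) -> (\sum_(i < k) pi i) * X = 0.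
Proof.
move=> H; rewrite mulr_suml big1 // => i _; exact: H.
Qed.

Lemma sum_idem k : (k <= K)%N -> idem (\sum_(i < k) pi i).
Proof.
elim: k => [|k IH] kK; first by rewrite /idem big_ord0 mulr0.
have kK' : (k < K)%N by exact: kK.
have kK'' : (k <= K)%N by exact: ltnW.
rewrite big_ord_recr /=; apply: idem_add; [exact: IH|exact: Ipi|split].
  apply: sum_right => i Hi; apply: Opi => //; last by rewrite neq_ltn Hi.
  exact: ltn_trans Hi kK'.
apply: sum_left => i Hi; apply: Opi => //; last by rewrite neq_ltn Hi orbT.
exact: ltn_trans Hi kK'.
Qed.

Lemma V1 k : (k <= K)%N -> forall Q, idem Q -> (forall i, (i < k)%N -> Orth (pi i) Q) -> Good Q ->
  S' (\sum_(i < k) pi i) (\sum_(i < k) pi i + Q).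
Proof.
elim: k => [|k IH] kK Q HQ HO HG; first by rewrite big_ord0; exact: S'0.
have kK' : (k < K)%N by exact: kK.
have kK'' : (k <= K)%N by exact: ltnW.
have iK i : (i < k)%N -> (i < K)%N by move=> Hi; exact: ltn_trans Hi kK'.
rewrite big_ord_recr /=.
set R := \sum_(i < k) pi i.
set P := pi k.
have HR : idem R by exact: sum_idem.
have HP : idem P by exact: Ipi.
have IH' := IH kK''.
have OPQ : Orth P Q by exact: HO.
have OPR : Orth P R.
  split; first by apply: sum_left => i Hi; apply: Opi; [exact: kK'|exact: iK|rewrite neq_ltn Hi orbT].
  by apply: sum_right => i Hi; apply: Opi; [exact: iK|exact: kK'|rewrite neq_ltn Hi].
have OQR : Orth (P + Q) R.
  split.
    rewrite mulrDl OPR.1 add0r; apply: sum_left => i Hi.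
    by apply: (HO i _).2; apply: ltnW.
  rewrite mulrDr OPR.2 add0r; apply: sum_right => i Hi.
  by apply: (HO i _).1; apply: ltnW.
have HPQ : idem (P + Q) by exact: idem_add.
have -> : R + P + Q = P + Q + R by rewrite (addrC R P) -addrA (addrC R Q) addrA.
have SPQ : S' P (P + Q) by apply: HG; [exact: Hpi|exact: Hpi|exact: OPQ|exact: OPQ].
have HpiK := Hpi kK'.
apply: (KLmain HP HPQ HR OPR OQR (addrC _ _) (erefl _) SPQ).
move=> c z1 Hc Hz1 cz1.
have [Hd HdPQ Ed Odq' [Hq' Hq'1 Hq'2]] := Dlemma HP HPQ Hc Hz1 cz1.
rewrite [X in S' _ X]addrC; apply: IH'; first exact: Hq'.
- move=> i Hi.
  have HOi : Orth (pi i) Q by apply: HO; exact: ltnW.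
  have ik : pi i * P = 0 by apply: Opi; [exact: iK|exact: kK'|rewrite neq_ltn Hi].
  have ki : P * pi i = 0 by apply: Opi; [exact: kK'|exact: iK|rewrite neq_ltn Hi orbT].
  have Oi : Orth (pi i) (P + Q).
    by split; [rewrite mulrDr ik add0r; exact: HOi.1|rewrite mulrDl ki add0r; exact: HOi.2].
  split.
    by rewrite -Hq'1 mulrA Oi.1 mul0r.
  by rewrite -Hq'2 -mulrA Oi.2 mulr0.
- move=> x y Hx Hy Ox Oy.
  have Ex : Eqv P x by apply: Eqv_trans HpiK (Eqv_sym Hx).
  have Ey : Eqv (z1 * c) y by apply: Eqv_trans (Eqv_trans Ed HpiK) (Eqv_sym Hy).
  have E2 : Eqv (z1 * c + (P + Q - z1 * c)) (y + (P + Q - z1 * c)).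
    by apply: Eqv_add => //; exact: Eqv_refl.
  rewrite addrC subrK in E2.
  exact: transport SPQ Ex E2.
Qed.

End V1.


Section Mat.
Variable A : pzRingType.
Variable m : nat.
Local Notation B := 'M[A]_m.+1.

Definition E (i j : 'I_m.+1) (x : A) : B :=
  \matrix_(k, l) (if (k == i) && (l == j) then x else 0).

Lemma sum_if (i : 'I_m.+1) (F : 'I_m.+1 -> A) :
  \sum_(k < m.+1) (if k == i then F k else 0) = F i.
Proof.
rewrite (bigD1 i) //= eqxx big1 ?addr0 // => k /negbTE ->; done.
Qed.

Lemma mulE i j j' k x y :
  E i j x * E j' k y = if j == j' then E i k (x * y) else 0.
Proof.
apply/matrixP => a b; rewrite !mxE (bigD1 j) //= big1 ?addr0; last first.
  by move=> l /negbTE Hl; rewrite !mxE Hl andbF mul0r.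
rewrite !mxE eqxx andbT.
case: (eqVneq j j') => [Hjj|Hne].
  rewrite /= mxE.
  by case: (a == i); case: (b == k); rewrite ?mulr0 ?mul0r.
by rewrite /= mxE mulr0.
Qed.

Lemma addE i j x y : E i j x + E i j y = E i j (x + y).
Proof.
apply/matrixP => a b; rewrite !mxE.
by case: (_ && _); rewrite ?addr0.
Qed.

Lemma E0 i j : E i j 0 = 0.
Proof. by apply/matrixP => a b; rewrite !mxE; case: (_ && _). Qed.

Lemma EN i j x : E i j (- x) = - E i j x.
Proof. by apply/matrixP => a b; rewrite !mxE; case: (_ && _); rewrite ?oppr0. Qed.

Lemma E_inj i j x y : E i j x = E i j y -> x = y.
Proof. by move/matrixP => /(_ i j); rewrite !mxE !eqxx. Qed.

Lemma E_sandwich i x y (M : B) : E i i x * M * E i i y = E i i (x * M i i * y).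
Proof.
apply/matrixP => a b; rewrite !mxE (bigD1 i) //= big1 ?addr0; last first.
  by move=> l /negbTE Hl; rewrite [E i i y l b]mxE Hl /= mulr0.
rewrite [E i i y i b]mxE eqxx /=.
rewrite -mulmxE mxE (bigD1 i) //= big1 ?addr0; last first.
  by move=> l /negbTE Hl; rewrite mxE Hl andbF mul0r.
rewrite mxE eqxx andbT.
by case: (a == i); case: (b == i); rewrite ?mulr0 ?mul0r.
Qed.

End Mat.


Section Embed.
Variables (A B : pzRingType) (psi : A -> B) (pr : B -> A).
Hypotheses (psiD : forall x y, psi (x + y) = psi x + psi y)
  (psiM : forall x y, psi (x * y) = psi x * psi y) (psiI : injective psi)
  (psiS : forall e f M, psi e * M * psi f = psi (e * pr M * f)).

Lemma psi_In e f a : In e f a -> In (psi e) (psi f) (psi a).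
Proof. by move=> [H1 H2]; split; rewrite -psiM ?H1 ?H2. Qed.

Lemma psi_idem e : idem e -> idem (psi e).
Proof. by rewrite /idem -psiM => ->. Qed.

Lemma psi_Eqv e e' : Eqv e e' -> Eqv (psi e) (psi e').
Proof.
move=> [w [w' [H1 [H2 [H3 H4]]]]]; exists (psi w), (psi w').
by split; [exact: psi_In|split; [exact: psi_In|rewrite -!psiM H3 H4]].
Qed.

Lemma psi_In_inv e f (M : B) : idem e -> idem f -> In (psi e) (psi f) M ->
  exists m, M = psi m /\ In e f m.
Proof.
move=> He Hf [H1 H2]; exists (e * pr M * f); split.
  by rewrite -psiS H1 H2.
exact: In_sandwich.
Qed.

Lemma embed_up e f : idem e -> idem f -> S' e f -> S' (psi e) (psi f).
Proof.
move=> He Hf HS a x b Ha Hx Hb Hr.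
have [a' [Ea Ha']] := psi_In_inv He Hf Ha; subst a.
have [x' [Ex Hx']] := psi_In_inv Hf He Hx; subst x.
have [b' [Eb Hb']] := psi_In_inv He He Hb; subst b.
have Hr' : a' * x' + b' = e by apply: psiI; rewrite psiD psiM.
have [y [z [Hy [Hz E]]]] := HS _ _ _ Ha' Hx' Hb' Hr'.
exists (psi y), (psi z); split; first exact: psi_In.
split; first exact: psi_In.
by rewrite -!psiM -psiD -psiM E.
Qed.

Lemma embed_down e f : idem e -> idem f -> S' (psi e) (psi f) -> S' e f.
Proof.
move=> He Hf HS a x b Ha Hx Hb Hr.
have Hr' : psi a * psi x + psi b = psi e by rewrite -psiM -psiD Hr.
have [Y [Z [HY [HZ E]]]] := HS _ _ _ (psi_In Ha) (psi_In Hx) (psi_In Hb) Hr'.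
have [y [Ey Hy]] := psi_In_inv He Hf HY; subst Y.
have [z [Ez Hz]] := psi_In_inv Hf He HZ; subst Z.
exists y, z; split => //; split => //.
by apply: psiI; rewrite psiM psiD psiM E.
Qed.

End Embed.

Section Gen3.
Variable B : pzRingType.
Implicit Types e f g a b c x y z t u : B.

Lemma corner_sub P g Q : idem P -> idem g -> idem Q -> P * g = g -> g * P = g ->
  Orth P Q -> S' P (P + Q) -> S' g (g + Q).
Proof.
move=> HP Hg HQ Pg gP [PQ QP] HS.
have gQ : g * Q = 0 by rewrite -gP -mulrA PQ mulr0.
have Qg : Q * g = 0 by rewrite -Pg mulrA QP mul0r.
have Hy : idem (P - g).
  by rewrite /idem mulrBl !mulrBr HP Pg gP Hg subrr subr0.
have Ogy : Orth g (P - g) by split; rewrite ?mulrBr ?mulrBl ?gP ?Pg Hg subrr.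
have OQy : Orth Q (P - g) by split; rewrite ?mulrBr ?mulrBl ?QP ?PQ ?Qg ?gQ subrr.
have OgQy : Orth (g + Q) (P - g).
  split.
    by rewrite mulrDl Ogy.1 OQy.1 addr0.
  by rewrite mulrDr Ogy.2 OQy.2 addr0.
apply: (V2 Hg (idem_add Hg HQ (conj gQ Qg)) Hy Ogy OgQy).
have E1 : g + (P - g) = P by rewrite addrC subrK.
by rewrite addrAC E1.
Qed.

Lemma Eqv_from e f a b : In e f a -> In f e b -> a * b = e -> Eqv e (b * a).
Proof.
move=> Ha Hb ab; exists a, b; split; last split; last split => //.
- by split; [exact: In_l Ha|rewrite mulrA ab (In_l Ha)].
- by split; [rewrite -mulrA ab (In_r Hb)|exact: In_r Hb].
Qed.

End Gen3.


Section Phi.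
Variable A : pzRingType.
Variable n : nat.

Definition phi (M : 'M[A]_n.+1) : 'M[A]_n.+2 :=
  \matrix_(i, j) match unlift ord0 i, unlift ord0 j with
                 | Some i', Some j' => M i' j' | _, _ => 0 end.

Lemma phiM (M M' : 'M[A]_n.+1) : phi (M * M') = phi M * phi M'.
Proof.
apply/matrixP => a b; rewrite !mxE big_ord_recl !mxE unlift_none.
under eq_bigr => k _ do rewrite !mxE liftK.
case: (unliftP ord0 a) => [a' _|_]; case: (unliftP ord0 b) => [b' _|_];
  rewrite /= ?mul0r ?add0r ?mxE.
- by [].
- by rewrite big1 // => k _; rewrite mulr0.
- by rewrite big1 // => k _; rewrite mul0r.
- by rewrite big1 // => k _; rewrite mul0r.
Qed.

Lemma phiD (M M' : 'M[A]_n.+1) : phi (M + M') = phi M + phi M'.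
Proof.
apply/matrixP => a b; rewrite !mxE.
by case: (unlift ord0 a) => [a'|]; case: (unlift ord0 b) => [b'|]; rewrite ?mxE ?addr0.
Qed.

Lemma phi0 : phi 0 = 0.
Proof.
apply/matrixP => a b; rewrite !mxE.
by case: (unlift ord0 a) => [a'|]; case: (unlift ord0 b) => [b'|]; rewrite ?mxE.
Qed.

Lemma phiE i j x : phi (E i j x) = E (lift ord0 i) (lift ord0 j) x.
Proof.
apply/matrixP => a b; rewrite !mxE.
case: (unliftP ord0 a) => [a'|] ->; case: (unliftP ord0 b) => [b'|] ->;
  rewrite ?liftK ?unlift_none /= ?mxE ?(inj_eq (@lift_inj _ ord0)) //.
- by rewrite (negbTE (neq_lift _ _)) andbF.
Qed.

Lemma phi_sum (F : 'I_n.+1 -> 'M[A]_n.+1) : phi (\sum_i F i) = \sum_i phi (F i).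
Proof.
elim/big_ind2: _ => //; first exact: phi0.
by move=> x1 x2 y1 y2 <- <-; rewrite phiD.
Qed.

End Phi.


Section Aux.
Variable A : pzRingType.
Variable m : nat.

Lemma idem_E (i : 'I_m.+1) (x : A) : idem x -> idem (E i i x).
Proof. by move=> H; rewrite /idem mulE eqxx H. Qed.

Lemma Eqv_E (i j : 'I_m.+1) (x : A) : idem x -> Eqv (E i i x) (E j j x).
Proof.
move=> H; exists (E i j x), (E j i x).
by rewrite /In !mulE !eqxx H.
Qed.

Lemma diagE (x : A) : (x%:M : 'M[A]_m.+1) = \sum_i E i i x.
Proof.
apply/matrixP => a b; rewrite summxE !mxE (bigD1 a) //= big1 ?addr0; last first.
  by move=> k /negbTE Hk; rewrite mxE eq_sym Hk.
rewrite mxE eqxx /= eq_sym.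
by case: (b == a).
Qed.

End Aux.

Unset Implicit Arguments.

Theorem proposition6 (A : pzRingType) (p q r : A) :
  is_idem p -> is_idem q -> is_idem r ->
  orth p r -> orth q r ->
  sr_one p q ->
  (exists n : nat, lesssim (corner_embed n r) (ndiag n p)) ->
  sr_one (p + r) (q + r).
Proof.
move=> Hp Hq Hr Opr Oqr Spq [n [al [be [Hal [Hbe albe]]]]].
have Spq' : S' p q by exact: (proj1 (sr_oneP Hp Hq) Spq).
apply/(sr_oneP (idem_add Hp Hr Opr) (idem_add Hq Hr Oqr)).
apply: (KLmain Hp Hq Hr Opr Oqr (erefl _) (erefl _) Spq').
move=> c z1 Hc Hz1 cz1.
have [Hd HdQ Ed Odq' [Hq' Hq'1 Hq'2]] := Dlemma Hp Hq Hc Hz1 cz1.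
set d := z1 * c in Hd HdQ Ed Odq' Hq' Hq'1 Hq'2 *.
set q' := q - d in Odq' Hq' Hq'1 Hq'2 *.
have rq' : r * q' = 0 by rewrite -Hq'1 mulrA Oqr.2 mul0r.
have q'r : q' * r = 0 by rewrite -Hq'2 -mulrA Oqr.1 mulr0.
pose psi (x : A) : 'M[A]_n.+2 := E ord0 ord0 x.
have psiD x y : psi (x + y) = psi x + psi y by rewrite /psi addE.
have psiM x y : psi (x * y) = psi x * psi y by rewrite /psi mulE eqxx.
have psiI : injective psi by move=> x y; exact: E_inj.
have psiS e f M : psi e * M * psi f = psi (e * M ord0 ord0 * f) by exact: E_sandwich.
have psi0 : psi 0 = 0 by exact: E0.
rewrite addrC.
apply: (embed_down psiD psiM psiI psiS Hr (idem_add Hr Hq' (conj rq' q'r))).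
rewrite psiD.
pose pi (i : nat) : 'M[A]_n.+2 := E (inord i.+1) (inord i.+1) p.
have Hpi i : (i < n.+1)%N -> Eqv (pi i) (psi p) by move=> _; exact: Eqv_E.
have Opi i j : (i < n.+1)%N -> (j < n.+1)%N -> i != j -> pi i * pi j = 0.
  move=> Hi Hj Hij; rewrite /pi mulE; case: eqP => // /(congr1 val).
  by rewrite /= !inordK // => -[] /eqP; rewrite (negbTE Hij).
have Hq'p : idem (psi q') by exact: (@psi_idem _ _ psi psiM q' Hq').
have Opq' i : (i < n.+1)%N -> Orth (pi i) (psi q').
  move=> Hi; split; rewrite /pi /psi mulE; case: eqP => //;
    move/(congr1 val); rewrite /= inordK //.
have HG : Good (psi p) (psi q').
  move=> x y Hx Hy Ox Oy.
  have S1 : S' (psi p) (psi q) by exact: (@embed_up _ _ psi (fun M => M ord0 ord0) psiD psiM psiI psiS _ _ Hp Hq Spq').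
  have Eq : psi q = psi d + psi q' by rewrite -psiD /q' addrC subrK.
  apply: (transport S1 (Eqv_sym Hx)); rewrite Eq; apply: Eqv_add.
  - by split; rewrite -psiM ?Odq'.1 ?Odq'.2 psi0.
  - exact: Oy.
  - exact: Eqv_trans (psi_Eqv psiM Ed) (Eqv_sym Hy).
  - exact: Eqv_refl.
have V := V1 Hpi Opi (leqnn _) Hq'p Opq' HG.
have PhE : phi (ndiag n p) = \sum_(i < n.+1) pi i.
  rewrite /ndiag diagE phi_sum; apply: eq_bigr => i _; rewrite phiE /pi.
  have -> : lift ord0 i = inord i.+1 :> 'I_n.+2.
    by apply: val_inj; rewrite /= inordK // ltnS ltn_ord.
  by [].
have Hcr : idem (corner_embed n r) by exact: (idem_E ord0 Hr).
have Hnd : idem (ndiag n p) by rewrite /idem /ndiag -mulmxE -scalar_mxM Hp.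
have Hal' := proj1 (in_cornerP al Hcr Hnd) Hal.
have Hbe' := proj1 (in_cornerP be Hnd Hcr) Hbe.
have phiIn e f a : In e f a -> In (phi e) (phi f) (phi a).
  by move=> [H1 H2]; split; rewrite -phiM ?H1 ?H2.
have albe' : phi al * phi be = phi (corner_embed n r) by rewrite -phiM albe.
have Eg := Eqv_from (phiIn _ _ _ _ _ Hal') (phiIn _ _ _ _ _ Hbe') albe'.
set g := phi be * phi al in Eg.
have Hg : idem g by exact: (Eqv_idem Eg).2.
have Pg : phi (ndiag n p) * g = g by rewrite /g mulrA (In_l (phiIn _ _ _ _ _ Hbe')).
have gP : g * phi (ndiag n p) = g by rewrite /g -mulrA (In_r (phiIn _ _ _ _ _ Hal')).
have HP : idem (phi (ndiag n p)) by rewrite /idem -phiM Hnd.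
have OPQ : Orth (phi (ndiag n p)) (psi q').
  rewrite PhE; split; [apply: sum_right => i Hi; exact: (Opq' i Hi).1|apply: sum_left => i Hi; exact: (Opq' i Hi).2].
have SP : S' (phi (ndiag n p)) (phi (ndiag n p) + psi q') by rewrite PhE.
have Sg := corner_sub HP Hg Hq'p Pg gP OPQ SP.
have ER : Eqv (phi (corner_embed n r)) (psi r).
  have -> : phi (corner_embed n r) = E (lift ord0 ord0) (lift ord0 ord0) r.
    exact: (phiE ord0 ord0 r).
  exact: Eqv_E.
have Eg' : Eqv g (psi r) by exact: Eqv_trans (Eqv_sym Eg) ER.
have Ogq : Orth g (psi q').
  split; first by rewrite -gP -mulrA OPQ.1 mulr0.
  by rewrite -Pg mulrA OPQ.2 mul0r.
have Orq : Orth (psi r) (psi q') by split; rewrite -psiM ?rq' ?q'r psi0.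
exact: transport Sg Eg' (Eqv_add Ogq Orq Eg' (Eqv_refl Hq'p)).
Qed.
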